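(* Let $[a,b]$ be a bounded interval, $n\ge2$ an integer, $h=(b-a)/n$, $x_k=a+kh$ ($0\le k\le n$), and let $X_n$ be the real vector space of maps $f:\{x_0,\ldots,x_n\}\to\mathbb R$. Let $s\ge0$, $\delta>0$, $0<c<1$, $M_0>0$, $C\ge0$, and let $N$ be a positive integer or $N=\infty$. For $1\le j\le N$ let $\theta_j:[a,b]\to[a,b]$ be Lipschitz with $\mathrm{Lip}(\theta_j)\le c$, let $\beta_j\in K_{M_0}\setminus\{0\}$, and let $C_j\in\mathbb R$ with $|C_j|\le C$. Define $\hat\beta_{j,s}\in X_n$ by $\hat\beta_{j,s}(x_k)=[1+\tfrac12C_jQ(\theta_j(x_k))][\beta_j(x_k)]^s$ and $L_{j,s}:X_n\to X_n$ by $(L_{j,s}f)(x_k)=\hat\beta_{j,s}(x_k)f^I(\theta_j(x_k))$. If $N=\infty$, assume there exists $k_0$ with $0\le k_0\le n$ such that $\sum_{j=1}^\infty\hat\beta_{j,s}(x_{k_0})<\infty$. Let $L_s=\sum_{j=1}^NL_{j,s}$. Assume $h\le1$, $Ch/4\le1$, and with $M_2=[sM_0+(1+h)/2]+\delta$ assume $\exp(-M_2h)\ge(1+c)/2$; let $M\in\mathbb R$ satisfy $\exp(Mh)\ge2$. Then $L_s(K_M\setminus\{0\})\subset K_{M-\delta}\setminus\{0\}$.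
   Context: For $f\in X_n$, $f^I:[a,b]\to\mathbb R$ is its piecewise linear interpolant: $f^I(x)=\frac{x-x_j}{h}f(x_{j+1})+\frac{x_{j+1}-x}{h}f(x_j)$ for $x_j\le x\le x_{j+1}$. For $M>0$, $K_M=\{f\in X_n: f(x_{j+1})\le f(x_j)e^{Mh}\text{ and }f(x_j)\le f(x_{j+1})e^{Mh},\ 0\le j<n\}$. $Q:[a,b]\to[0,h^2/4]$ is $Q(u)=(x_{j+1}-u)(u-x_j)$ for $x_j\le u\le x_{j+1}$. *)

(* Defs.v *)
From Stdlib Require Import Reals.
From Coquelicot Require Import Coquelicot.
Open Scope R_scope.

(* Grid on [a,b]: h = (b-a)/n, x_k = a + k h.  Elements of X_n are
   represented by functions nat -> R, only the values at 0..n matter. *)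
Definition hstep (a b : R) (n : nat) : R := (b - a) / INR n.
Definition node (a b : R) (n : nat) (k : nat) : R := a + INR k * hstep a b n.

(* index j with x_j <= u <= x_{j+1} (for u in [a,b]); j = n-1 at u = b *)
Definition idx (a b : R) (n : nat) (u : R) : nat :=
  Nat.min (Z.to_nat (Int_part ((u - a) / hstep a b n))) (n - 1).

Definition interp (a b : R) (n : nat) (f : nat -> R) (u : R) : R :=
  let j := idx a b n u in
  (u - node a b n j) / hstep a b n * f (S j)
  + (node a b n (S j) - u) / hstep a b n * f j.

Definition Qfun (a b : R) (n : nat) (u : R) : R :=
  let j := idx a b n u in (node a b n (S j) - u) * (u - node a b n j).

Definition inK (a b : R) (n : nat) (M : R) (f : nat -> R) : Prop :=
  forall j : nat, (j < n)%nat ->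
    f (S j) <= f j * exp (M * hstep a b n) /\
    f j <= f (S j) * exp (M * hstep a b n).

Definition nonzeroX (n : nat) (f : nat -> R) : Prop :=
  exists k : nat, (k <= n)%nat /\ f k <> 0.

Definition inKstar (a b : R) (n : nat) (M : R) (f : nat -> R) : Prop :=
  inK a b n M f /\ nonzeroX n f.

(* N : option nat, None encodes N = infinity; j ranges over 1 <= j <= N *)
Definition in_range (N : option nat) (j : nat) : Prop :=
  (1 <= j)%nat /\ match N with Some m => (j <= m)%nat | None => True end.

Definition betahat (a b : R) (n : nat) (s : R) (th : R -> R) (Cj : R)
  (bj : nat -> R) (k : nat) : R :=
  (1 + / 2 * Cj * Qfun a b n (th (node a b n k))) * Rpower (bj k) s.

Definition Lterm (a b : R) (n : nat) (s : R) (th : nat -> R -> R)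
  (Cs : nat -> R) (beta : nat -> nat -> R) (f : nat -> R) (j k : nat) : R :=
  betahat a b n s (th j) (Cs j) (beta j) k * interp a b n f (th j (node a b n k)).

Definition Ls (a b : R) (n : nat) (s : R) (N : option nat) (th : nat -> R -> R)
  (Cs : nat -> R) (beta : nat -> nat -> R) (f : nat -> R) (k : nat) : R :=
  match N with
  | Some m => sum_n_m (fun j => Lterm a b n s th Cs beta f j k) 1 m
  | None => Series (fun j => Lterm a b n s th Cs beta f (S j) k)
  end.

(* Main.v *)
Require Import Defs.
From Stdlib Require Import Reals Lra Lia Psatz ZArith.
From Coquelicot Require Import Coquelicot.
Open Scope R_scope.

Lemma H_pos a b n : a < b -> (1 <= n)%nat -> 0 < hstep a b n.
Proof. intros. unfold hstep. apply Rdiv_lt_0_compat. lra. apply lt_0_INR; lia. Qed.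

Lemma node_S a b n k : node a b n (S k) = node a b n k + hstep a b n.
Proof. unfold node. rewrite S_INR. ring. Qed.

Lemma node_n a b n : (1 <= n)%nat -> node a b n n = b.
Proof. intros. unfold node, hstep. assert (0 < INR n) by (apply lt_0_INR; lia). field. lra. Qed.

Lemma node_0 a b n : node a b n 0 = a.
Proof. unfold node. simpl. ring. Qed.

Lemma node_le a b n i j : a < b -> (1 <= n)%nat -> node a b n i <= node a b n j -> (i <= j)%nat.
Proof. intros. unfold node in H1. pose proof (H_pos a b n H H0).
  destruct (le_lt_dec i j); auto. apply lt_INR in l. nra. Qed.

Lemma node_lt a b n i j : a < b -> (1 <= n)%nat -> node a b n i < node a b n j -> (i < j)%nat.
Proof. intros. unfold node in H1. pose proof (H_pos a b n H H0).
  destruct (le_lt_dec j i); auto. apply le_INR in l. nra. Qed.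

Lemma node_mono a b n i j : a < b -> (1 <= n)%nat -> (i <= j)%nat -> node a b n i <= node a b n j.
Proof. intros. unfold node. pose proof (H_pos a b n H H0). apply le_INR in H1. nra. Qed.

Lemma idx_spec a b n u : a < b -> (1 <= n)%nat -> a <= u <= b ->
  (idx a b n u < n)%nat /\ node a b n (idx a b n u) <= u <= node a b n (S (idx a b n u)).
Proof.
  intros Hab Hn Hu. pose proof (H_pos a b n Hab Hn) as Hh.
  assert (Hr0 : 0 <= (u - a) / hstep a b n) by (apply Rdiv_le_0_compat; lra).
  assert (Hrn : (u - a) / hstep a b n <= INR n).
  { unfold hstep in *. assert (0 < INR n) by (apply lt_0_INR; lia).
    apply Rmult_le_reg_r with ((b-a)/INR n); auto. field_simplify; [|lra|lra].
    replace ((u-a)/(b-a)*(b-a)) with (u-a) by (field; lra). lra. }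
  unfold idx. set (r := (u - a) / hstep a b n) in *.
  destruct (base_Int_part r) as [H1 H2].
  set (z := Int_part r) in *.
  assert (Hz : (0 <= z)%Z). { assert (-1 < IZR z) by lra. apply lt_IZR in H. lia. }
  set (m := Z.to_nat z).
  assert (Hm : INR m = IZR z). { unfold m. rewrite INR_IZR_INZ, Z2Nat.id; auto. }
  destruct (le_lt_dec m (n-1)) as [Hle|Hlt].
  - rewrite Nat.min_l by auto. split. lia.
    unfold node. rewrite S_INR, Hm.
    assert (IZR z * hstep a b n <= u - a).
    { replace (u - a) with (r * hstep a b n) by (unfold r; field; lra). nra. }
    assert (u - a < (IZR z + 1) * hstep a b n).
    { replace (u - a) with (r * hstep a b n) by (unfold r; field; lra). nra. }
    lra.
  - rewrite Nat.min_r by lia. split. lia.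
    assert (Hq: INR n <= INR m) by (apply le_INR; lia).
    assert (Hr: r = INR n) by lra.
    assert (Hub: u = b).
    { assert (Hx: u - a = r * hstep a b n) by (unfold r; field; lra).
      rewrite Hr in Hx. unfold hstep in Hx. assert (0 < INR n) by (apply lt_0_INR; lia).
      field_simplify in Hx; lra. }
    replace (S (n-1)) with n by lia. rewrite node_n by auto. split; [|lra].
    rewrite Hub. rewrite <- (node_n a b n) at 2 by auto. apply node_mono; auto; lia.
Qed.
Definition lin a b n (f : nat -> R) j u :=
  (u - node a b n j) / hstep a b n * f (S j) + (node a b n (S j) - u) / hstep a b n * f j.

Lemma interp_any a b n f j u : a < b -> (1 <= n)%nat -> (j < n)%nat -> a <= u <= b ->
  node a b n j <= u <= node a b n (S j) -> Defs.interp a b n f u = lin a b n f j u.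
Proof.
  intros Hab Hn Hj Hu Hju. pose proof (H_pos a b n Hab Hn) as Hh.
  destruct (idx_spec a b n u Hab Hn Hu) as [Hi Hiu].
  unfold Defs.interp, lin. set (i := idx a b n u) in *.
  assert (i <= S j)%nat by (apply (node_le a b n); auto; lra).
  assert (j <= S i)%nat by (apply (node_le a b n); auto; lra).
  assert (i = j \/ i = S j \/ j = S i)%nat as [E|[E|E]] by lia.
  - rewrite E; reflexivity.
  - assert (u = node a b n i) by (rewrite E in *; lra).
    rewrite E in *. rewrite H1. rewrite !node_S. field_simplify; try lra.
  - assert (u = node a b n j) by (rewrite E in *; lra).
    rewrite E in *. rewrite H1. rewrite !node_S. field_simplify; try lra.
Qed.

Lemma Q_bound a b n u : a < b -> (1 <= n)%nat -> a <= u <= b ->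
  0 <= Qfun a b n u <= hstep a b n ^ 2 / 4.
Proof.
  intros Hab Hn Hu. destruct (idx_spec a b n u Hab Hn Hu) as [Hi Hiu].
  unfold Qfun; cbv zeta. set (i := idx a b n u) in *. rewrite node_S in *.
  split. nra. pose proof (pow2_ge_0 (u - node a b n i - hstep a b n / 2)). nra.
Qed.

Lemma K_nonneg a b n M g : (1 <= n)%nat -> 1 < exp (M * hstep a b n) -> inK a b n M g ->
  forall k, (k <= n)%nat -> 0 <= g k.
Proof.
  intros Hn HE HK k Hk. set (E := exp (M * hstep a b n)) in *.
  destruct (Nat.eq_dec k n) as [->|Hne].
  - destruct (HK (n-1)%nat ltac:(lia)) as [A B]. fold E in A, B. replace (S (n-1)) with n in * by lia.
    assert (g (n-1)%nat * E <= g n * E * E) by (apply Rmult_le_compat_r; lra).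
    assert (g n * (E*E-1) = g n * E * E - g n) by ring. assert (0 < E*E-1) by nra.
    apply Rmult_le_reg_r with (E*E-1); [lra|]. rewrite Rmult_0_l. lra.
  - destruct (HK k ltac:(lia)) as [A B]. fold E in A, B.
    assert (g (S k) * E <= g k * E * E) by (apply Rmult_le_compat_r; lra).
    assert (g k * (E*E-1) = g k * E * E - g k) by ring. assert (0 < E*E-1) by nra.
    apply Rmult_le_reg_r with (E*E-1); [lra|]. rewrite Rmult_0_l. lra.
Qed.

Lemma K_dist a b n M g : 1 <= exp (M * hstep a b n) -> inK a b n M g ->
  (forall k, (k <= n)%nat -> 0 <= g k) ->
  forall d k, (k + d <= n)%nat ->
  g (k + d)%nat <= g k * exp (M * hstep a b n) ^ d /\ g k <= g (k + d)%nat * exp (M * hstep a b n) ^ d.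
Proof.
  intros HE HK Hp d. set (E := exp (M * hstep a b n)) in *.
  induction d; intros k Hk.
  - rewrite Nat.add_0_r. simpl. lra.
  - destruct (IHd k ltac:(lia)) as [A B].
    destruct (HK (k + d)%nat ltac:(lia)) as [C D]. fold E in C, D.
    replace (k + S d)%nat with (S (k + d)) by lia. simpl.
    assert (0 <= g k) by (apply Hp; lia).
    assert (0 <= g (k+d)%nat) by (apply Hp; lia).
    assert (0 <= g (S (k+d))) by (apply Hp; lia).
    assert (0 <= E ^ d) by (apply pow_le; lra).
    split; nra.
Qed.

Lemma K_pos a b n M g : (1 <= n)%nat -> 1 < exp (M * hstep a b n) -> inKstar a b n M g ->
  forall k, (k <= n)%nat -> 0 < g k.
Proof.
  intros Hn HE [HK [k0 [Hk0 Hnz]]] k Hk.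
  pose proof (K_nonneg a b n M g Hn HE HK) as Hp.
  assert (0 < g k0) by (pose proof (Hp k0 Hk0); lra).
  pose proof (K_dist a b n M g ltac:(lra) HK Hp) as D.
  set (E := exp (M * hstep a b n)) in *.
  assert (0 < E ^ (n)) by (apply pow_lt; lra).
  destruct (le_lt_dec k0 k).
  - destruct (D (k - k0)%nat k0 ltac:(lia)) as [_ B]. replace (k0 + (k - k0))%nat with k in B by lia.
    assert (0 < E ^ (k-k0)) by (apply pow_lt; lra). nra.
  - destruct (D (k0 - k)%nat k ltac:(lia)) as [A _]. replace (k + (k0 - k))%nat with k0 in A by lia.
    assert (0 < E ^ (k0-k)) by (apply pow_lt; lra). pose proof (Hp k Hk). nra.
Qed.

Lemma K_bound a b n M g : 1 <= exp (M * hstep a b n) -> inK a b n M g ->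
  (forall k, (k <= n)%nat -> 0 <= g k) ->
  forall k1 k2, (k1 <= n)%nat -> (k2 <= n)%nat ->
  g k1 <= g k2 * exp (M * hstep a b n) ^ n.
Proof.
  intros HE HK Hp k1 k2 H1 H2.
  pose proof (K_dist a b n M g HE HK Hp) as D. set (E := exp (M * hstep a b n)) in *.
  assert (0 <= g k2) by auto.
  destruct (le_lt_dec k2 k1).
  - destruct (D (k1 - k2)%nat k2 ltac:(lia)) as [A _]. replace (k2 + (k1 - k2))%nat with k1 in A by lia.
    assert (E ^ (k1 - k2) <= E ^ n) by (apply Rle_pow; auto; lia). nra.
  - destruct (D (k2 - k1)%nat k1 ltac:(lia)) as [_ B]. replace (k1 + (k2 - k1))%nat with k2 in B by lia.
    assert (E ^ (k2 - k1) <= E ^ n) by (apply Rle_pow; auto; lia).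
    assert (1 <= E ^ (k2 - k1)) by (apply pow_R1_Rle; auto).
    assert (0 <= g k1) by auto. nra.
Qed.

Lemma alg1 p q t1 t2 c E : 0 < p -> 0 < q -> q <= p * E -> p <= q * E -> 0 <= t1 <= 1 -> 0 <= t2 <= 1 ->
  t1 - t2 <= c -> t2 - t1 <= c -> 0 <= c -> 1 <= E ->
  t1 * q + (1 - t1) * p <= (1 + (E - 1) * c) * (t2 * q + (1 - t2) * p).
Proof.
  intros. set (F2 := t2 * q + (1 - t2) * p).
  assert (E1 : t1 * q + (1 - t1) * p = F2 + (t1 - t2) * (q - p)) by (unfold F2; ring).
  rewrite E1.
  assert (Hd : (t1 - t2) * (q - p) <= c * (E - 1) * F2).
  { destruct (Rle_dec p q).
    - assert (F2 >= p) by (unfold F2; nra).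
      assert ((t1 - t2) * (q - p) <= c * (q - p)) by nra.
      assert (q - p <= (E - 1) * p) by lra.
      assert (c * (q - p) <= c * ((E - 1) * p)) by nra.
      assert (c * (E-1) * p <= c * (E-1) * F2) by (apply Rmult_le_compat_l; nra).
      nra.
    - assert (F2 >= q) by (unfold F2; nra).
      assert ((t1 - t2) * (q - p) <= c * (p - q)) by nra.
      assert (p - q <= (E - 1) * q) by lra.
      assert (c * (p - q) <= c * ((E - 1) * q)) by nra.
      assert (c * (E-1) * q <= c * (E-1) * F2) by (apply Rmult_le_compat_l; nra).
      nra. }
  nra.
Qed.

Lemma alg2 p q r s1 s2 c E : 0 <= p -> 0 < q -> q <= p * E -> r <= q * E ->
  0 <= s1 <= 1 -> 0 <= s2 -> s1 + s2 <= c -> c < 1 -> 1 <= E ->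
  s2 * r + (1 - s2) * q <= (1 + (E - 1) * c) * (s1 * p + (1 - s1) * q).
Proof.
  intros. set (D := E - 1). set (X := s1 * p + (1 - s1) * q).
  assert (L : s2 * r + (1 - s2) * q <= q * (1 + (c - s1) * D)).
  { assert (s2 * r <= s2 * (q * E)) by nra.
    assert (s2 <= c - s1) by lra. assert (0 <= q * D) by (unfold D; nra).
    assert (s2 * (q * D) <= (c - s1) * (q * D)) by nra. unfold D in *. nra. }
  assert (EX : E * X >= q * (E - s1 * D)).
  { unfold X, D. assert (s1 * (p * E) >= s1 * q) by nra. nra. }
  assert (Hk : 1 + D * c <= E) by (unfold D; nra).
  assert (0 <= 1 + D * c) by (unfold D; nra).
  apply Rle_trans with (q * (1 + (c - s1) * D)); auto.
  apply Rmult_le_reg_l with E; [lra|].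
  assert (HH : E * ((1 + D * c) * X) = (1 + D*c) * (E * X)) by ring.
  rewrite HH.
  assert ((1 + D * c) * (E * X) >= (1 + D*c) * (q * (E - s1 * D))) by (apply Rmult_ge_compat_l; lra).
  assert (0 <= s1 * D * q) by (apply Rmult_le_pos; [apply Rmult_le_pos|]; unfold D; lra).
  assert ((1 + D*c) * (s1 * D * q) <= E * (s1 * D * q)) by (apply Rmult_le_compat_r; lra).
  nra.
Qed.

Lemma lin_param a b n f j u : a < b -> (1 <= n)%nat ->
  lin a b n f j u = ((u - node a b n j) / hstep a b n) * f (S j) + (1 - (u - node a b n j) / hstep a b n) * f j.
Proof. intros. pose proof (H_pos a b n H H0). unfold lin. rewrite node_S. field. lra. Qed.

Lemma tb x u h : 0 < h -> x <= u <= x + h -> 0 <= (u - x) / h <= 1.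
Proof. intros. split. apply Rdiv_le_0_compat; lra.
  apply Rmult_le_reg_r with h; auto. field_simplify; lra. Qed.

Lemma tdiff x u v h c : 0 < h -> u - v <= c * h -> (u - x) / h - (v - x) / h <= c.
Proof. intros. apply Rmult_le_reg_r with h; auto. field_simplify; try lra. Qed.

Lemma F_ratio a b n M c f u v : a < b -> (1 <= n)%nat -> 1 <= exp (M * hstep a b n) ->
  inK a b n M f -> (forall k, (k <= n)%nat -> 0 < f k) -> 0 <= c < 1 ->
  a <= u <= b -> a <= v <= b -> Rabs (u - v) <= c * hstep a b n ->
  Defs.interp a b n f u <= (1 + (exp (M * hstep a b n) - 1) * c) * Defs.interp a b n f v.
Proof.
  intros Hab Hn HE HK Hf Hc Hu Hv Huv.
  pose proof (H_pos a b n Hab Hn) as Hh. set (H := hstep a b n) in *.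
  set (E := exp (M * H)) in *.
  assert (Huv1 : u - v <= c * H) by (apply Rabs_le_between in Huv; lra).
  assert (Huv2 : v - u <= c * H) by (apply Rabs_le_between in Huv; lra).
  assert (HcH : c * H <= H) by nra.
  destruct (idx_spec a b n v Hab Hn Hv) as [Hi Hiv]. set (i := idx a b n v) in *.
  rewrite node_S in Hiv. fold H in Hiv.
  rewrite (interp_any a b n f i v) by (auto; rewrite node_S; fold H; lra).
  destruct (Rle_dec u (node a b n (S i))) as [Hu1|Hu1]; [destruct (Rle_dec (node a b n i) u) as [Hu2|Hu2]|].
  - rewrite (interp_any a b n f i u) by auto.
    rewrite !lin_param by auto. fold H.
    destruct (HK i Hi) as [K1 K2]. fold H E in K1, K2. rewrite node_S in Hu1. fold H in Hu1.
    apply alg1; try apply Hf; try lia; auto; try lra.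
    + apply tb; lra.
    + apply tb; lra.
    + exact (tdiff (node a b n i) u v H c Hh Huv1).
    + exact (tdiff (node a b n i) v u H c Hh Huv2).
  -
    destruct i as [|i'] eqn:Ei.
    { rewrite node_0 in Hu2. lra. }
    assert (Hu3 : node a b n i' <= u).
    { rewrite node_S in Hu2, Hiv. fold H in Hu2, Hiv. lra. }
    rewrite (interp_any a b n f i' u) by (auto; try lia; lra).
    rewrite !lin_param by auto.
    destruct (HK i' ltac:(lia)) as [K1 K2]. destruct (HK (S i') Hi) as [K3 K4]. fold H E in K1, K2, K3, K4.
    rewrite ?node_S in Hu1, Hu2, Hiv |- *. fold H in Hu1, Hu2, Hiv |- *.
    set (s2 := 1 - (u - node a b n i') / H).
    set (s1 := (v - (node a b n i' + H)) / H).
    match goal with |- ?L <= ?K * ?R =>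
      replace L with (s2 * f i' + (1 - s2) * f (S i')) by (unfold s1, s2; ring);
      replace R with (s1 * f (S (S i')) + (1 - s1) * f (S i')) by (unfold s1, s2; ring) end.
    assert (0 <= s1 <= 1) by (unfold s1; apply tb; lra).
    assert (0 <= s2) by (unfold s2; pose proof (tb (node a b n i') u H Hh ltac:(lra)); lra).
    assert (s1 + s2 <= c).
    { unfold s1, s2. apply Rmult_le_reg_r with H; auto. field_simplify; lra. }
    apply alg2; auto; try lra. all: try (left; apply Hf; lia); try (apply Hf; lia).
  -
    apply Rnot_le_lt in Hu1.
    assert (HSi : (S i < n)%nat).
    { apply (node_lt a b n); auto. rewrite node_n by auto. lra. }
    rewrite (interp_any a b n f (S i) u) by (auto; rewrite !node_S; fold H; rewrite node_S in Hu1; fold H in Hu1; lra).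
    rewrite !lin_param by auto.
    destruct (HK i Hi) as [K1 K2]. destruct (HK (S i) HSi) as [K3 K4]. fold H E in K1, K2, K3, K4.
    rewrite ?node_S in Hu1. rewrite ?node_S in Hiv. rewrite ?node_S. fold H in Hu1, Hiv |- *.
    set (s2 := (u - (node a b n i + H)) / H).
    set (s1 := 1 - (v - node a b n i) / H).
    match goal with |- ?L <= ?K * ?R =>
      replace L with (s2 * f (S (S i)) + (1 - s2) * f (S i)) by (unfold s1, s2; ring);
      replace R with (s1 * f i + (1 - s1) * f (S i)) by (unfold s1, s2; ring) end.
    assert (0 <= s1 <= 1) by (unfold s1; pose proof (tb (node a b n i) v H Hh ltac:(lra)); lra).
    assert (0 <= s2) by (unfold s2; apply Rdiv_le_0_compat; lra).
    assert (s1 + s2 <= c).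
    { unfold s1, s2. apply Rmult_le_reg_r with H; auto. field_simplify; lra. }
    apply alg2; auto; try lra. all: try (left; apply Hf; lia); try (apply Hf; lia).
Qed.

Lemma exp_le' x y : x <= y -> exp x <= exp y.
Proof. intros [H|H]. left; apply exp_increasing; auto. subst; lra. Qed.

Lemma const_bound s M0 M H c delta : 0 < H <= 1 -> 0 < c < 1 ->
  exp (- ((s * M0 + (1 + H) / 2) + delta) * H) >= (1 + c) / 2 ->
  exp (M * H) >= 2 ->
  exp (s * M0 * H) * (1 + (exp (M * H) - 1) * c) <= exp ((M - delta) * H) * (1 - H / 2).
Proof.
  intros Hh Hc Hyp HE.
  set (A := exp (s * M0 * H)). set (B := exp ((1 + H) / 2 * H)). set (D := exp (delta * H)).
  set (E := exp (M * H)) in *.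
  assert (A > 0) by apply exp_pos. assert (B > 0) by apply exp_pos. assert (D > 0) by apply exp_pos.
  assert (Eq1 : exp (- ((s * M0 + (1 + H) / 2) + delta) * H) = / (A * B * D)).
  { replace (- ((s * M0 + (1 + H) / 2) + delta) * H) with (- (s * M0 * H + (1 + H) / 2 * H + delta * H)) by ring.
    rewrite exp_Ropp. unfold A, B, D. rewrite <- !exp_plus. reflexivity. }
  assert (Eq2 : exp ((M - delta) * H) = E / D).
  { unfold E, D, Rdiv. rewrite <- exp_Ropp, <- exp_plus. f_equal. ring. }
  rewrite Eq1 in Hyp. rewrite Eq2.
  assert (Hy : (1 + c) * (A * B * D) <= 2).
  { apply Rge_le in Hyp. apply Rmult_le_compat_r with (r := A * B * D) in Hyp; [|left; apply Rmult_lt_0_compat; [apply Rmult_lt_0_compat|]; auto].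
    rewrite Rinv_l in Hyp. lra. apply Rgt_not_eq. apply Rmult_lt_0_compat; [apply Rmult_lt_0_compat|]; auto. }
  assert (HB : 1 <= B * (1 - H / 2)).
  { pose proof (exp_ineq1_le ((1 + H) / 2 * H)). fold B in H3. nra. }
  assert (HX : 1 + (E - 1) * c <= E * (1 + c) / 2) by nra.
  apply Rmult_le_reg_r with D; auto.
  replace (E / D * (1 - H / 2) * D) with (E * (1 - H/2)) by (field; lra).
  assert (A * (1 + (E - 1) * c) * D <= A * (E * (1 + c) / 2) * D).
  { apply Rmult_le_compat_r; [lra|]. apply Rmult_le_compat_l; lra. }
  assert (A * (E * (1 + c) / 2) * D * (B * (1 - H/2)) <= E * (1 - H/2)).
  { replace (A * (E * (1 + c) / 2) * D * (B * (1 - H/2))) with ((1 + c) * (A * B * D) * (E * (1 - H/2) / 2)) by field.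
    assert (0 <= E * (1 - H/2) / 2) by nra. nra. }
  assert (0 <= A * (E * (1 + c) / 2) * D) by (apply Rmult_le_pos; [apply Rmult_le_pos|]; nra).
  nra.
Qed.

Lemma interp_pos a b n f u : a < b -> (1 <= n)%nat -> (forall k, (k <= n)%nat -> 0 < f k) ->
  a <= u <= b -> 0 < Defs.interp a b n f u.
Proof.
  intros Hab Hn Hf Hu. pose proof (H_pos a b n Hab Hn).
  destruct (idx_spec a b n u Hab Hn Hu) as [Hi Hiu].
  rewrite (interp_any a b n f (idx a b n u) u) by auto. rewrite lin_param by auto.
  rewrite node_S in Hiu.
  pose proof (tb _ _ _ H Hiu). pose proof (Hf (idx a b n u) ltac:(lia)). pose proof (Hf (S (idx a b n u)) ltac:(lia)).
  set (t := (u - node a b n (idx a b n u)) / hstep a b n) in *. nra.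
Qed.

Lemma P_bound a b n C Cj u : a < b -> (1 <= n)%nat -> 0 <= C -> Rabs Cj <= C ->
  hstep a b n <= 1 -> C * hstep a b n / 4 <= 1 -> a <= u <= b ->
  (0 <= Cj -> 0 <= / 2 * Cj * Qfun a b n u <= hstep a b n / 2) /\
  (Cj <= 0 -> - (hstep a b n / 2) <= / 2 * Cj * Qfun a b n u <= 0).
Proof.
  intros Hab Hn HC HCj Hh1 HCh Hu. pose proof (H_pos a b n Hab Hn) as Hh.
  pose proof (Q_bound a b n u Hab Hn Hu) as [Q1 Q2].
  apply Rabs_le_between in HCj.
  set (H := hstep a b n) in *. set (Q := Qfun a b n u) in *.
  assert (C * H * H <= 4 * H) by nra.
  assert (C * Q <= H) by nra.
  split; intros; split; nra.
Qed.

Lemma Rp_ratio (x y s M0 H : R) : 0 < x -> 0 < y -> 0 <= s -> x <= y * exp (M0 * H) ->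
  Rpower x s <= exp (s * M0 * H) * Rpower y s.
Proof.
  intros. unfold Rpower. rewrite <- exp_plus. apply exp_le'.
  assert (ln x <= ln y + M0 * H).
  { rewrite <- (ln_exp (M0 * H)), <- ln_mult by (auto; apply exp_pos). apply ln_le; auto. }
  nra.
Qed.

Lemma node_in a b n k : a < b -> (1 <= n)%nat -> (k <= n)%nat -> a <= node a b n k <= b.
Proof. intros. pose proof (node_mono a b n 0 k H H0 ltac:(lia)). pose proof (node_mono a b n k n H H0 H1).
  rewrite node_0 in H2. rewrite node_n in H3 by auto. lra. Qed.

Lemma term_ratio a b n s delta c M0 C M (thj : R -> R) Cj (bj : nat -> R) f k1 k2 :
  a < b -> (1 <= n)%nat -> 0 <= s -> 0 < c < 1 -> 0 < M0 -> 0 <= C ->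
  (forall x, a <= x <= b -> a <= thj x <= b) ->
  (forall x y, a <= x <= b -> a <= y <= b -> Rabs (thj x - thj y) <= c * Rabs (x - y)) ->
  inKstar a b n M0 bj -> Rabs Cj <= C ->
  hstep a b n <= 1 -> C * hstep a b n / 4 <= 1 ->
  exp (- ((s * M0 + (1 + hstep a b n) / 2) + delta) * hstep a b n) >= (1 + c) / 2 ->
  exp (M * hstep a b n) >= 2 ->
  inKstar a b n M f ->
  (k1 <= n)%nat -> (k2 <= n)%nat -> (k1 = S k2 \/ k2 = S k1) ->
  betahat a b n s thj Cj bj k1 * Defs.interp a b n f (thj (node a b n k1)) <=
  exp ((M - delta) * hstep a b n) *
  (betahat a b n s thj Cj bj k2 * Defs.interp a b n f (thj (node a b n k2))).
Proof.
  intros Hab Hn Hs Hc HM0 HC Hth Hlip Hb HCj Hh1 HCh Hexp HE Hf Hk1 Hk2 Hadj.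
  pose proof (H_pos a b n Hab Hn) as Hh.
  assert (HM0E : 1 < exp (M0 * hstep a b n)).
  { rewrite <- exp_0. apply exp_increasing. nra. }
  assert (HME : 1 < exp (M * hstep a b n)) by lra.
  pose proof (K_pos a b n M0 bj Hn HM0E Hb) as Hbp.
  pose proof (K_pos a b n M f Hn HME Hf) as Hfp.
  assert (Hn1 : a <= node a b n k1 <= b).
  { apply node_in; auto. }
  assert (Hn2 : a <= node a b n k2 <= b).
  { apply node_in; auto. }
  assert (Hd : Rabs (node a b n k1 - node a b n k2) <= hstep a b n).
  { destruct Hadj as [->| ->]; rewrite node_S; [replace (_ + _ - _) with (hstep a b n) by ring|replace (_ - _) with (- hstep a b n) by ring; rewrite Rabs_Ropp]; rewrite Rabs_pos_eq; lra. }
  assert (Hu : Rabs (thj (node a b n k1) - thj (node a b n k2)) <= c * hstep a b n).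
  { eapply Rle_trans. apply Hlip; auto. apply Rmult_le_compat_l; lra. }
  pose proof (F_ratio a b n M c f _ _ Hab Hn ltac:(lra) (proj1 Hf) Hfp ltac:(lra) (Hth _ Hn1) (Hth _ Hn2) Hu) as HF.
  pose proof (interp_pos a b n f (thj (node a b n k1)) Hab Hn Hfp (Hth _ Hn1)) as F1p.
  pose proof (interp_pos a b n f (thj (node a b n k2)) Hab Hn Hfp (Hth _ Hn2)) as F2p.
  pose proof (P_bound a b n C Cj _ Hab Hn HC HCj Hh1 HCh (Hth _ Hn1)) as P1b.
  pose proof (P_bound a b n C Cj _ Hab Hn HC HCj Hh1 HCh (Hth _ Hn2)) as P2b.
  assert (HR : Rpower (bj k1) s <= exp (s * M0 * hstep a b n) * Rpower (bj k2) s).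
  { apply Rp_ratio; auto. destruct Hadj as [->| ->].
    - apply (proj1 Hb k2); lia.
    - apply (proj1 Hb k1); lia. }
  pose proof (const_bound s M0 M (hstep a b n) c delta ltac:(lra) Hc Hexp HE) as HK.
  unfold betahat.
  set (H := hstep a b n) in *.
  set (P1 := 1 + / 2 * Cj * Qfun a b n (thj (node a b n k1))) in *.
  set (P2 := 1 + / 2 * Cj * Qfun a b n (thj (node a b n k2))) in *.
  set (R1 := Rpower (bj k1) s) in *. set (R2 := Rpower (bj k2) s) in *.
  set (F1 := Defs.interp a b n f (thj (node a b n k1))) in *.
  set (F2 := Defs.interp a b n f (thj (node a b n k2))) in *.
  set (A := exp (s * M0 * H)) in *. set (X := 1 + (exp (M * H) - 1) * c) in *.
  set (G := exp ((M - delta) * H)) in *.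
  assert (R1p : 0 < R1) by (unfold R1, Rpower; apply exp_pos).
  assert (R2p : 0 < R2) by (unfold R2, Rpower; apply exp_pos).
  assert (Ap : 0 < A) by (unfold A; apply exp_pos).
  assert (HP : P1 * (1 - H / 2) <= P2).
  { assert (P1 <= P2 + H/2) by (unfold P1, P2 in *; destruct (Rle_dec 0 Cj);
      [destruct P1b as [P1b _]; destruct P2b as [P2b _] | destruct P1b as [_ P1b]; destruct P2b as [_ P2b]];
      try specialize (P1b ltac:(lra)); try specialize (P2b ltac:(lra)); lra).
    assert (P2 >= 1 - H/2) by (unfold P2 in *; destruct (Rle_dec 0 Cj);
      [destruct P2b as [P2b _] | destruct P2b as [_ P2b]]; specialize (P2b ltac:(lra)); lra). nra. }
  assert (P1p : 0 < P1) by (unfold P1; destruct (Rle_dec 0 Cj);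
      [destruct P1b as [P1b _] | destruct P1b as [_ P1b]]; specialize (P1b ltac:(lra)); lra).
  assert (P2p : 0 < P2) by (unfold P2; destruct (Rle_dec 0 Cj);
      [destruct P2b as [P2b _] | destruct P2b as [_ P2b]]; specialize (P2b ltac:(lra)); lra).
  apply Rmult_le_reg_r with (1 - H / 2); [lra|].
  replace (P1 * R1 * F1 * (1 - H / 2)) with ((P1 * (1 - H / 2)) * R1 * F1) by ring.
  apply Rle_trans with (P2 * (A * R2) * (X * F2)).
  { apply Rmult_le_compat; [apply Rmult_le_pos; [apply Rmult_le_pos|]; lra | lra | | exact HF].
    apply Rmult_le_compat; [apply Rmult_le_pos; lra | lra | exact HP | exact HR]. }
  replace (P2 * (A * R2) * (X * F2)) with ((A * X) * (P2 * R2 * F2)) by ring.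
  replace (G * (P2 * R2 * F2) * (1 - H / 2)) with ((G * (1 - H / 2)) * (P2 * R2 * F2)) by ring.
  apply Rmult_le_compat_r; auto. apply Rmult_le_pos; [apply Rmult_le_pos|]; lra.
Qed.

Lemma sum_le_loc (u v : nat -> R) n0 m : (forall j, (n0 <= j <= m)%nat -> u j <= v j) ->
  sum_n_m u n0 m <= sum_n_m v n0 m.
Proof.
  intros Hj.
  rewrite (sum_n_m_ext_loc u (fun j => if (Nat.leb n0 j && Nat.leb j m)%bool then u j else v j)).
  - apply sum_n_m_le. intros k. destruct (Nat.leb n0 k) eqn:E1; destruct (Nat.leb k m) eqn:E2; simpl; try lra.
    apply Hj. apply Nat.leb_le in E1, E2. lia.
  - intros k Hk. destruct Hk as [A B]. apply Nat.leb_le in A, B. rewrite A, B. reflexivity.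
Qed.

Lemma P_lo a b n C Cj u : a < b -> (1 <= n)%nat -> 0 <= C -> Rabs Cj <= C ->
  hstep a b n <= 1 -> C * hstep a b n / 4 <= 1 -> a <= u <= b ->
  1 - hstep a b n / 2 <= 1 + / 2 * Cj * Qfun a b n u <= 1 + hstep a b n / 2.
Proof.
  intros. pose proof (P_bound a b n C Cj u H H0 H1 H2 H3 H4 H5) as [A B].
  destruct (Rle_dec 0 Cj). specialize (A r); lra. specialize (B ltac:(lra)); lra.
Qed.

Lemma bh_pos a b n s C (thj : R -> R) Cj bj k : a < b -> (1 <= n)%nat -> 0 <= C -> Rabs Cj <= C ->
  hstep a b n <= 1 -> C * hstep a b n / 4 <= 1 ->
  (forall x, a <= x <= b -> a <= thj x <= b) -> (k <= n)%nat ->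
  0 < betahat a b n s thj Cj bj k.
Proof.
  intros. unfold betahat. pose proof (node_in a b n k H H0 H6).
  pose proof (P_lo a b n C Cj _ H H0 H1 H2 H3 H4 (H5 _ H7)).
  apply Rmult_lt_0_compat. lra. unfold Rpower; apply exp_pos.
Qed.

Lemma interp_le a b n M f u : a < b -> (1 <= n)%nat -> 1 <= exp (M * hstep a b n) ->
  inK a b n M f -> (forall k, (k <= n)%nat -> 0 < f k) -> a <= u <= b ->
  Defs.interp a b n f u <= f 0%nat * exp (M * hstep a b n) ^ n.
Proof.
  intros Hab Hn HE HK Hf Hu. pose proof (H_pos a b n Hab Hn).
  destruct (idx_spec a b n u Hab Hn Hu) as [Hi Hiu].
  rewrite (interp_any a b n f (idx a b n u) u) by auto. rewrite lin_param by auto.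
  rewrite node_S in Hiu.
  pose proof (tb _ _ _ H Hiu).
  assert (Hp : forall k, (k <= n)%nat -> 0 <= f k) by (intros; left; auto).
  pose proof (K_bound a b n M f HE HK Hp (idx a b n u) 0%nat ltac:(lia) ltac:(lia)).
  pose proof (K_bound a b n M f HE HK Hp (S (idx a b n u)) 0%nat ltac:(lia) ltac:(lia)).
  set (t := (u - node a b n (idx a b n u)) / hstep a b n) in *. nra.
Qed.

Lemma term_bound a b n s M0 C M (thj : R -> R) Cj (bj : nat -> R) f k k0 :
  a < b -> (1 <= n)%nat -> 0 <= s -> 0 < M0 -> 0 <= C ->
  (forall x, a <= x <= b -> a <= thj x <= b) ->
  inKstar a b n M0 bj -> Rabs Cj <= C ->
  hstep a b n <= 1 -> C * hstep a b n / 4 <= 1 ->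
  exp (M * hstep a b n) >= 2 ->
  inKstar a b n M f ->
  (k <= n)%nat -> (k0 <= n)%nat ->
  betahat a b n s thj Cj bj k * Defs.interp a b n f (thj (node a b n k)) <=
  (3 * Rpower (exp (M0 * hstep a b n) ^ n) s * (f 0%nat * exp (M * hstep a b n) ^ n)) *
  betahat a b n s thj Cj bj k0.
Proof.
  intros Hab Hn Hs HM0 HC Hth Hb HCj Hh1 HCh HE Hf Hk Hk0.
  pose proof (H_pos a b n Hab Hn) as Hh.
  assert (HM0E : 1 < exp (M0 * hstep a b n)).
  { rewrite <- exp_0. apply exp_increasing. nra. }
  assert (HME : 1 < exp (M * hstep a b n)) by lra.
  pose proof (K_pos a b n M0 bj Hn HM0E Hb) as Hbp.
  pose proof (K_pos a b n M f Hn HME Hf) as Hfp.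
  pose proof (node_in a b n k Hab Hn Hk) as Hn1.
  pose proof (node_in a b n k0 Hab Hn Hk0) as Hn2.
  pose proof (interp_le a b n M f _ Hab Hn ltac:(lra) (proj1 Hf) Hfp (Hth _ Hn1)) as HF.
  pose proof (interp_pos a b n f _ Hab Hn Hfp (Hth _ Hn1)) as HFp.
  pose proof (P_lo a b n C Cj _ Hab Hn HC HCj Hh1 HCh (Hth _ Hn1)) as P1.
  pose proof (P_lo a b n C Cj _ Hab Hn HC HCj Hh1 HCh (Hth _ Hn2)) as P2.
  assert (Hbb : bj k <= bj k0 * exp (M0 * hstep a b n) ^ n).
  { apply K_bound; auto. lra. apply (proj1 Hb). intros; left; auto. }
  assert (HEp : 0 < exp (M0 * hstep a b n) ^ n) by (apply pow_lt; lra).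
  assert (HR : Rpower (bj k) s <= Rpower (bj k0) s * Rpower (exp (M0 * hstep a b n) ^ n) s).
  { rewrite Rpower_mult_distr by auto. apply Rle_Rpower_l; auto. }
  unfold betahat.
  set (H := hstep a b n) in *.
  set (Q1 := 1 + / 2 * Cj * Qfun a b n (thj (node a b n k))) in *.
  set (Q2 := 1 + / 2 * Cj * Qfun a b n (thj (node a b n k0))) in *.
  set (R1 := Rpower (bj k) s) in *. set (R2 := Rpower (bj k0) s) in *.
  set (W := Rpower (exp (M0 * H) ^ n) s) in *.
  set (F := Defs.interp a b n f (thj (node a b n k))) in *.
  set (Fm := f 0%nat * exp (M * H) ^ n) in *.
  assert (R1p : 0 < R1) by (unfold R1, Rpower; apply exp_pos).
  assert (R2p : 0 < R2) by (unfold R2, Rpower; apply exp_pos).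
  assert (Wp : 0 < W) by (unfold W, Rpower; apply exp_pos).
  assert (Q1 <= 3 * Q2) by lra.
  apply Rle_trans with ((3 * Q2) * (R2 * W) * Fm).
  { apply Rmult_le_compat; try lra. apply Rmult_le_pos; lra.
    apply Rmult_le_compat; lra. }
  replace (3 * Q2 * (R2 * W) * Fm) with (3 * W * Fm * (Q2 * R2)) by ring. lra.
Qed.

Theorem theorem8p3 (a b : R) (n : nat) (s delta c M0 C : R) (N : option nat)
  (th : nat -> R -> R) (beta : nat -> nat -> R) (Cs : nat -> R) (M : R) :
  a < b -> (2 <= n)%nat ->
  0 <= s -> 0 < delta -> 0 < c < 1 -> 0 < M0 -> 0 <= C ->
  match N with Some m => (1 <= m)%nat | None => True end ->
  (forall j, in_range N j ->
     (forall x, a <= x <= b -> a <= th j x <= b) /\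
     (forall x y, a <= x <= b -> a <= y <= b ->
        Rabs (th j x - th j y) <= c * Rabs (x - y))) ->
  (forall j, in_range N j -> inKstar a b n M0 (beta j)) ->
  (forall j, in_range N j -> Rabs (Cs j) <= C) ->
  (N = None -> exists k0 : nat, (k0 <= n)%nat /\
     ex_series (fun j => betahat a b n s (th (S j)) (Cs (S j)) (beta (S j)) k0)) ->
  hstep a b n <= 1 ->
  C * hstep a b n / 4 <= 1 ->
  exp (- ((s * M0 + (1 + hstep a b n) / 2) + delta) * hstep a b n) >= (1 + c) / 2 ->
  exp (M * hstep a b n) >= 2 ->
  forall f : nat -> R, inKstar a b n M f ->
    (N = None -> forall k : nat, (k <= n)%nat ->
       ex_series (fun j => Lterm a b n s th Cs beta f (S j) k)) /\
    inKstar a b n (M - delta) (Ls a b n s N th Cs beta f).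
Proof.
  intros Hab Hn2 Hs Hd Hc HM0 HC HNm Hth Hb HCs Hsum Hh1 HCh Hexp HE f Hf.
  assert (Hn : (1 <= n)%nat) by lia.
  pose proof (H_pos a b n Hab Hn) as Hh.
  assert (HME : 1 < exp (M * hstep a b n)) by lra.
  pose proof (K_pos a b n M f Hn HME Hf) as Hfp.
  set (G := exp ((M - delta) * hstep a b n)).
  assert (TR : forall j, in_range N j -> forall k1 k2, (k1 <= n)%nat -> (k2 <= n)%nat ->
            (k1 = S k2 \/ k2 = S k1) ->
            Lterm a b n s th Cs beta f j k1 <= G * Lterm a b n s th Cs beta f j k2).
  { intros j Hj k1 k2 Hk1 Hk2 Hadj. destruct (Hth j Hj) as [T1 T2]. unfold Lterm.
    apply (term_ratio a b n s delta c M0 C M); auto. }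
  assert (TP : forall j, in_range N j -> forall k, (k <= n)%nat -> 0 < Lterm a b n s th Cs beta f j k).
  { intros j Hj k Hk. destruct (Hth j Hj) as [T1 T2]. unfold Lterm.
    apply Rmult_lt_0_compat. apply (bh_pos a b n s C); auto.
    apply interp_pos; auto. apply T1. apply node_in; auto. }
  assert (SER : N = None -> forall k, (k <= n)%nat ->
            ex_series (fun j => Lterm a b n s th Cs beta f (S j) k)).
  { intros HN k Hk. destruct (Hsum HN) as [k0 [Hk0 Hex]].
    assert (Hr : forall j, in_range N (S j)) by (intros; subst N; split; [lia|exact I]).
    apply (@ex_series_le R_AbsRing R_CompleteNormedModule) with
      (b := fun j => scal (3 * Rpower (exp (M0 * hstep a b n) ^ n) s * (f 0%nat * exp (M * hstep a b n) ^ n))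
                         (betahat a b n s (th (S j)) (Cs (S j)) (beta (S j)) k0)).
    - intros j. change (norm (Lterm a b n s th Cs beta f (S j) k)) with (Rabs (Lterm a b n s th Cs beta f (S j) k)).
      rewrite Rabs_pos_eq by (left; apply TP; auto).
      destruct (Hth (S j) (Hr j)) as [T1 T2]. unfold Lterm.
      apply (term_bound a b n s M0 C M); auto.
    - apply (@ex_series_scal_l R_AbsRing R_NormedModule). exact Hex. }
  split; [exact SER|].
  split.
  - intros i Hi. fold G. destruct N as [m|] eqn:EN.
    + unfold Ls. split.
      * rewrite Rmult_comm.
        replace (G * sum_n_m (fun j => Lterm a b n s th Cs beta f j i) 1 m)
          with (sum_n_m (fun j => G * Lterm a b n s th Cs beta f j i) 1 m)
          by (apply (sum_n_m_mult_l G (fun j => Lterm a b n s th Cs beta f j i))).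
        apply sum_le_loc. intros j Hj. apply TR; try lia. split; lia.
      * rewrite Rmult_comm.
        replace (G * sum_n_m (fun j => Lterm a b n s th Cs beta f j (S i)) 1 m)
          with (sum_n_m (fun j => G * Lterm a b n s th Cs beta f j (S i)) 1 m)
          by (apply (sum_n_m_mult_l G (fun j => Lterm a b n s th Cs beta f j (S i)))).
        apply sum_le_loc. intros j Hj. apply TR; try lia. split; lia.
    + assert (Hr : forall j, in_range None (S j)) by (intros; split; [lia|exact I]).
      unfold Ls. split.
      * rewrite Rmult_comm, <- Series_scal_l. apply Series_le.
        -- intros j. split. left; apply TP; auto; lia. apply TR; auto; lia.
        -- apply (@ex_series_scal_l R_AbsRing R_NormedModule G (fun j => Lterm a b n s th Cs beta f (S j) i)). apply SER; auto; lia.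
      * rewrite Rmult_comm, <- Series_scal_l. apply Series_le.
        -- intros j. split. left; apply TP; auto; lia. apply TR; auto; lia.
        -- apply (@ex_series_scal_l R_AbsRing R_NormedModule G (fun j => Lterm a b n s th Cs beta f (S j) (S i))). apply SER; auto; lia.
  - exists 0%nat. split; [lia|]. apply Rgt_not_eq.
    destruct N as [m|] eqn:EN.
    + unfold Ls. rewrite sum_Sn_m by auto.
      change (plus ?x ?y) with (x + y).
      assert (0 <= sum_n_m (fun j => Lterm a b n s th Cs beta f j 0) 2 m).
      { apply Rle_trans with (sum_n_m (fun _ => zero) 2 m).
        rewrite sum_n_m_const_zero. apply Rle_refl.
        apply sum_le_loc. intros j Hj. left. apply TP. split; lia. lia. }
      pose proof (TP 1%nat ltac:(split; lia) 0%nat ltac:(lia)). lra.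
    + assert (Hr : forall j, in_range None (S j)) by (intros; split; [lia|exact I]).
      unfold Ls. rewrite Series_incr_1 by (apply SER; auto; lia).
      pose proof (TP 1%nat (Hr 0%nat) 0%nat ltac:(lia)).
      assert (0 <= Series (fun k => Lterm a b n s th Cs beta f (S (S k)) 0)).
      { apply Rle_trans with (Series (fun _:nat => 0)).
        { rewrite (Series_ext (fun _ => 0) (fun k => 0 * Lterm a b n s th Cs beta f (S (S k)) 0)) by (intros; ring).
          rewrite Series_scal_l. lra. }
        apply Series_le.
        - intros j. split; [lra|]. left; apply TP; auto; lia.
        - apply (proj1 (ex_series_incr_1 (fun k => Lterm a b n s th Cs beta f (S k) 0))). apply SER; auto; lia. }
      lra.
Qed.
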